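(* The proof system ${\bf K^\boxplus}$ is sound and strongly complete with respect to the class of all bimodal frames: for every set $\Gamma\subseteq\mathcal{L}(\boxplus)$ and $\phi\in\mathcal{L}(\boxplus)$, $\Gamma\vdash_{{\bf K^\boxplus}}\phi$ iff $\phi$ is true at every state of every bimodal model at which all formulas of $\Gamma$ are true.
   Context: Fix a nonempty set $\mathbf{P}$ of propositional variables. A bimodal model is $\langle S,R_1,R_2,V\rangle$ with $S$ nonempty, $R_1,R_2\subseteq S\times S$, $V:\mathbf{P}\to\mathcal{P}(S)$. Write $R_i(s)=\{t\mid sR_it\}$. $\mathcal{L}(\boxplus):\ \phi::=p\mid\neg\phi\mid(\phi\wedge\phi)\mid\boxplus\phi$ (other connectives, $\top,\bot$ abbreviations). Truth: $\mathcal{M},s\vDash\boxplus\phi$ iff ($\mathcal{M},t\vDash\phi$ for all $t\in R_1(s)$) or ($\mathcal{M},u\vDash\neg\phi$ for all $u\in R_2(s)$); atoms and Booleans as usual. ${\bf K^\boxplus}$ has axioms: all instances of propositional tautologies; CON: $\boxplus\phi\wedge\boxplus\psi\to\boxplus(\phi\wedge\psi)\wedge\boxplus(\phi\vee\psi)$; DIS: $\boxplus\phi\to\boxplus(\phi\vee\psi)\vee\boxplus(\phi\wedge\chi)$; and rules: modus ponens; RN: from $\phi$ infer $\boxplus\phi\wedge\boxplus\neg\phi$; RE: from $\phi\leftrightarrow\psi$ infer $\boxplus\phi\leftrightarrow\boxplus\psi$. $\Gamma\vdash\phi$ means there are finitely many $\gamma_1,\dots,\gamma_n\in\Gamma$ with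 $\gamma_1\wedge\dots\wedge\gamma_n\to\phi$ a theorem. *)

(* Defs.v *)
From Stdlib Require Import List.
Import ListNotations.

Section Logic.
Variable P : Type.

Inductive form : Type :=
| Var : P -> form
| Neg : form -> form
| And : form -> form -> form
| Bplus : form -> form.

Definition Or (a b : form) : form := Neg (And (Neg a) (Neg b)).
Definition Imp (a b : form) : form := Neg (And a (Neg b)).
Definition Iff (a b : form) : form := And (Imp a b) (Imp b a).

(* Propositional (Boolean) evaluation: boxplus-formulas are treated as atoms. *)
Fixpoint peval (v : P -> bool) (w : form -> bool) (f : form) : bool :=
  match f with
  | Var p => v p
  | Neg a => negb (peval v w a)
  | And a b => andb (peval v w a) (peval v w b)
  | Bplus a => w (Bplus a)
  end.

Definition taut (f : form) : Prop :=
  forall (v : P -> bool) (w : form -> bool), peval v w f = true.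

Inductive thm : form -> Prop :=
| Ax_taut : forall f, taut f -> thm f
| Ax_CON : forall a b,
    thm (Imp (And (Bplus a) (Bplus b))
             (And (Bplus (And a b)) (Bplus (Or a b))))
| Ax_DIS : forall a b c,
    thm (Imp (Bplus a) (Or (Bplus (Or a b)) (Bplus (And a c))))
| R_MP : forall a b, thm a -> thm (Imp a b) -> thm b
| R_N : forall a, thm a -> thm (And (Bplus a) (Bplus (Neg a)))
| R_E : forall a b, thm (Iff a b) -> thm (Iff (Bplus a) (Bplus b)).

Fixpoint bigAnd (g : form) (l : list form) : form :=
  match l with
  | [] => g
  | g' :: l' => And g (bigAnd g' l')
  end.

Definition derives (Gamma : form -> Prop) (phi : form) : Prop :=
  thm phi \/
  exists (g : form) (l : list form),
    (forall x, In x (g :: l) -> Gamma x) /\ thm (Imp (bigAnd g l) phi).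

Record model : Type := {
  st : Type;
  st_inh : st;
  R1 : st -> st -> Prop;
  R2 : st -> st -> Prop;
  val : P -> st -> Prop
}.

Fixpoint sat (M : model) (s : st M) (f : form) : Prop :=
  match f with
  | Var p => val M p s
  | Neg a => ~ sat M s a
  | And a b => sat M s a /\ sat M s b
  | Bplus a => (forall t, R1 M s t -> sat M t a) \/
               (forall u, R2 M s u -> ~ sat M u a)
  end.

Definition conseq (Gamma : form -> Prop) (phi : form) : Prop :=
  forall (M : model) (s : st M), (forall g, Gamma g -> sat M s g) -> sat M s phi.

End Logic.

Arguments Var {P}. Arguments Neg {P}. Arguments And {P}. Arguments Bplus {P}.

(* Main.v *)
Require Import Defs.
From mathcomp Require Import all_boot classical_sets boolp.
Lemma my_zorn (T : Type) (P : (T -> Prop) -> Prop) :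
  (forall F : (T -> Prop) -> Prop, (forall X, F X -> P X) ->
     (forall X Y, F X -> F Y -> (forall t, X t -> Y t) \/ (forall t, Y t -> X t)) ->
     P (fun t => exists X, F X /\ X t)) ->
  exists A, P A /\ forall B, (forall t, A t -> B t) -> P B -> forall t, B t -> A t.
Proof.
Local Open Scope classical_set_scope.
move=> H.
have [] := @Zorn_bigcup T P.
  move=> F FP Ft.
  have -> : (\bigcup_(X in F) X) = (fun t => exists X, F X /\ X t).
    by apply/funext => t; apply/propext; split => [[X FX Xt]|[X [FX Xt]]]; [exists X|exists X].
  by apply: H => // X Y FX FY; apply: Ft.
move=> A [PA Am].
exists A; split => // B AB PB t Bt.
apply: contrapT => nAt; apply: (Am B) => //; split => // BA.
by apply: nAt; apply: BA.
Qed.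

From Stdlib Require Import List Classical ClassicalDescription.
Import ListNotations.

Section Main.
Variable P : Type.
Variable p0 : P.

Notation form := (form P).
Notation thm := (thm P).
Notation taut := (taut P).
Notation peval := (peval P).
Notation Imp := (Imp P).
Notation Or := (Or P).
Notation Iff := (Iff P).

Definition Top : form := Neg (And (Var p0) (Neg (Var p0))).
Definition Bot : form := Neg Top.

Fixpoint conj (l : list form) : form :=
  match l with
  | [] => Top
  | a :: l' => And a (conj l')
  end.

Ltac bt :=
  let v := fresh "v" in let w := fresh "w" in
  intros v w; unfold Or, Imp, Iff, Bot, Top in *; simpl;
  repeat (match goal with
   | |- context [peval ?v ?w ?x] => destruct (peval v w x)
   | |- context [?w (Bplus ?x)] => destruct (w (Bplus x))
   | |- context [?v p0] => destruct (v p0)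
   end); simpl; intros; try reflexivity; try discriminate.

Lemma thm_comb0 C : (forall v w, peval v w C = true) -> thm C.
Proof. intros H; apply Ax_taut; exact H. Qed.

Lemma thm_comb1 A C : thm A ->
  (forall v w, peval v w A = true -> peval v w C = true) -> thm C.
Proof.
  intros HA H. apply (R_MP _ A C HA). apply Ax_taut. intros v w.
  unfold Imp; simpl. specialize (H v w). destruct (peval v w A), (peval v w C); auto.
Qed.

Lemma thm_comb A B C : thm A -> thm B ->
  (forall v w, peval v w A = true -> peval v w B = true -> peval v w C = true) -> thm C.
Proof.
  intros HA HB H. apply (R_MP _ B C HB). apply (R_MP _ A _ HA). apply Ax_taut. intros v w.
  unfold Imp; simpl. specialize (H v w).
  destruct (peval v w A), (peval v w B), (peval v w C); auto.
Qed.

Lemma peval_conj_app v w l1 l2 :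
  peval v w (conj (app l1 l2)) = andb (peval v w (conj l1)) (peval v w (conj l2)).
Proof.
  induction l1 as [|a l IH]; simpl.
  - destruct (v p0); reflexivity.
  - rewrite IH. destruct (peval v w a); reflexivity.
Qed.

Definition ded (X : form -> Prop) (a : form) : Prop :=
  exists l, (forall x, In x l -> X x) /\ thm (Imp (conj l) a).

Lemma ded_thm X a : thm a -> ded X a.
Proof.
  intros H; exists []; split; [simpl; tauto|].
  apply (thm_comb1 _ _ H); bt.
Qed.

Lemma ded_in X a : X a -> ded X a.
Proof.
  intros H; exists [a]; split; [simpl; intros x [<-|[]]; auto|].
  apply thm_comb0; bt.
Qed.

Lemma ded_mp X a b c : ded X a -> ded X b ->
  (forall v w, peval v w a = true -> peval v w b = true -> peval v w c = true) -> ded X c.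
Proof.
  intros [l1 [H1 T1]] [l2 [H2 T2]] H.
  exists (app l1 l2); split.
  - intros x Hx; apply in_app_or in Hx; destruct Hx; auto.
  - apply (thm_comb _ _ _ T1 T2). intros v w.
    specialize (H v w). unfold Imp; simpl. rewrite peval_conj_app.
    destruct (peval v w (conj l1)), (peval v w (conj l2)), (peval v w a),
      (peval v w b), (peval v w c); simpl in *; auto.
Qed.

Lemma ded_mp1 X a c : ded X a ->
  (forall v w, peval v w a = true -> peval v w c = true) -> ded X c.
Proof.
  intros H1 H. apply (ded_mp X a a c H1 H1). auto.
Qed.

Lemma ded_mono (X Y : form -> Prop) a : (forall x, X x -> Y x) -> ded X a -> ded Y a.
Proof. intros S [l [H T]]; exists l; split; auto. Qed.

Lemma filter_lemma (X : form -> Prop) psi l :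
  (forall x, In x l -> X x \/ x = psi) ->
  exists l', (forall x, In x l' -> X x) /\
    thm (Imp (And (conj l') psi) (conj l)).
Proof.
  induction l as [|a l IH]; intros H.
  - exists []; split; [simpl; tauto|]. apply thm_comb0; bt.
  - destruct IH as [l' [H1 T1]]. { intros x Hx; apply H; simpl; auto. }
    destruct (H a (in_eq a l)) as [Ha| ->].
    + exists (a :: l'); split.
      * simpl; intros x [<-|Hx]; auto.
      * apply (thm_comb1 _ _ T1); bt.
    + exists l'; split; auto. apply (thm_comb1 _ _ T1); bt.
Qed.

Lemma deduction (X : form -> Prop) psi c :
  ded (fun x => X x \/ x = psi) c -> ded X (Imp psi c).
Proof.
  intros [l [H T]]. destruct (filter_lemma X psi l H) as [l' [H' T']].
  exists l'; split; auto. apply (thm_comb _ _ _ T T'); bt.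
Qed.

Definition cons (X : form -> Prop) : Prop := ~ ded X Bot.

Definition mcs (M : form -> Prop) : Prop :=
  cons M /\ forall psi, cons (fun x => M x \/ x = psi) -> M psi.

Section MCS.
Variable M : form -> Prop.
Hypothesis HM : mcs M.

Lemma mcs_ded a : ded M a -> M a.
Proof.
  intros H. apply (proj2 HM). intros Hc. apply deduction in Hc.
  apply (proj1 HM). apply (ded_mp _ _ _ _ H Hc). bt.
Qed.

Lemma mcs_thm a : thm a -> M a.
Proof. intros; apply mcs_ded, ded_thm; auto. Qed.

Lemma mcs_neg a : M (Neg a) <-> ~ M a.
Proof.
  split.
  - intros H1 H2. apply (proj1 HM). apply (ded_mp _ _ _ _ (ded_in _ _ H1) (ded_in _ _ H2)). bt.
  - intros H. apply (proj2 HM). intros Hc. apply H. apply (proj2 HM).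
    intros Hc2. apply deduction in Hc. apply deduction in Hc2.
    apply (proj1 HM). apply (ded_mp _ _ _ _ Hc Hc2). bt.
Qed.

Lemma mcs_and a b : M (And a b) <-> M a /\ M b.
Proof.
  split.
  - intros H; split; apply mcs_ded; apply (ded_mp1 _ _ _ (ded_in _ _ H)); bt.
  - intros [Ha Hb]; apply mcs_ded; apply (ded_mp _ _ _ _ (ded_in _ _ Ha) (ded_in _ _ Hb)); bt.
Qed.

Lemma mcs_or a b : M (Or a b) -> M a \/ M b.
Proof.
  intros H. destruct (classic (M a)) as [|Ha]; auto.
  destruct (classic (M b)) as [|Hb]; auto.
  exfalso. unfold Or in H. apply mcs_neg in H. apply H. apply mcs_and.
  split; apply mcs_neg; auto.
Qed.

Lemma mcs_mp1 a c : M a ->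
  (forall v w, peval v w a = true -> peval v w c = true) -> M c.
Proof. intros Ha H; apply mcs_ded; apply (ded_mp1 _ _ _ (ded_in _ _ Ha) H). Qed.

Lemma mcs_mp a b c : M a -> M b ->
  (forall v w, peval v w a = true -> peval v w b = true -> peval v w c = true) -> M c.
Proof. intros Ha Hb H; apply mcs_ded; apply (ded_mp _ _ _ _ (ded_in _ _ Ha) (ded_in _ _ Hb) H). Qed.

End MCS.


Notation model := (model P).
Notation sat := (sat P).
Notation st := (st P).

Definition db (Q : Prop) : bool := if excluded_middle_informative Q then true else false.

Lemma db_true Q : db Q = true <-> Q.
Proof. unfold db; destruct (excluded_middle_informative Q); split; intros; auto; discriminate. Qed.

Lemma peval_sat (M : model) (s : st M) : forall f,
  peval (fun p => db (Defs.val P M p s)) (fun g => db (sat M s g)) f = true <-> sat M s f.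
Proof.
  induction f as [p|a IH|a IHa b IHb|a IH]; simpl.
  - apply db_true.
  - rewrite <- IH. destruct (peval _ _ a); simpl; intuition discriminate.
  - rewrite <- IHa, <- IHb. destruct (peval _ _ a), (peval _ _ b); simpl; intuition discriminate.
  - apply (db_true (sat M s (Bplus a))).
Qed.

Lemma sat_imp (M : model) s a b : sat M s (Imp a b) <-> (sat M s a -> sat M s b).
Proof. unfold Defs.Imp; simpl; split; intros H; [intros Ha; apply NNPP; intros Hb; apply H; auto|tauto]. Qed.

Lemma sat_or (M : model) s a b : sat M s (Or a b) <-> (sat M s a \/ sat M s b).
Proof. unfold Defs.Or; simpl; split; intros H; [apply NNPP; tauto|tauto]. Qed.

Lemma sat_iff (M : model) s a b : sat M s (Iff a b) <-> (sat M s a <-> sat M s b).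
Proof.
  unfold Defs.Iff; change (sat M s (And (Imp a b) (Imp b a))) with (sat M s (Imp a b) /\ sat M s (Imp b a)).
  rewrite !sat_imp; tauto. Qed.

Lemma soundness f : thm f -> forall (M : model) s, sat M s f.
Proof.
  induction 1 as [f Ht|a b|a b c|a b _ IHa _ IHab|a _ IH|a b _ IH]; intros M s.
  - apply peval_sat. apply Ht.
  - rewrite sat_imp; simpl.
    intros [[H1|H1] [H2|H2]]; split.
    + left; intros t Ht; split; auto.
    + left; intros t Ht; apply sat_or; auto.
    + right; intros u Hu [_ Hb]; apply (H2 u Hu Hb).
    + left; intros t Ht; apply sat_or; auto.
    + right; intros u Hu [Ha _]; apply (H1 u Hu Ha).
    + left; intros t Ht; apply sat_or; auto.
    + right; intros u Hu [Ha _]; apply (H1 u Hu Ha).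
    + right; intros u Hu Ho; apply sat_or in Ho; destruct Ho as [Ho|Ho];
        [apply (H1 u Hu Ho)|apply (H2 u Hu Ho)].
  - rewrite sat_imp; rewrite sat_or; simpl. intros [H|H].
    + left; left; intros t Ht; apply sat_or; auto.
    + right; right; intros u Hu [Ha _]; apply (H u Hu Ha).
  - specialize (IHab M s). rewrite sat_imp in IHab. auto.
  - simpl; split; [left; auto|right; intros u Hu Hn; apply Hn; auto].
  - rewrite sat_iff; simpl.
    assert (E : forall M s, sat M s a <-> sat M s b) by (intros; apply sat_iff; auto).
    split; intros [H|H].
    + left; intros t Ht. apply E. apply H, Ht.
    + right; intros t Ht Hb. apply (H t Ht). apply E. exact Hb.
    + left; intros t Ht. apply E. apply H, Ht.
    + right; intros t Ht Ha. apply (H t Ht). apply E. exact Ha.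
Qed.

Lemma bigAnd_conj v w g l : peval v w (bigAnd P g l) = peval v w (conj (g :: l)).
Proof.
  revert g; induction l as [|g' l IH]; intros g; simpl.
  - destruct (peval v w g), (v p0); reflexivity.
  - rewrite IH. reflexivity.
Qed.

Lemma derives_ded Gamma phi : derives P Gamma phi <-> ded Gamma phi.
Proof.
  split.
  - intros [H|[g [l [H T]]]].
    + apply ded_thm; auto.
    + exists (g :: l); split; auto. apply (thm_comb1 _ _ T). intros v w.
      unfold Defs.Imp; simpl. rewrite bigAnd_conj. simpl. auto.
  - intros [[|g l] [H T]].
    + left. apply (thm_comb _ _ _ T (thm_comb0 Top ltac:(bt))). bt.
    + right; exists g, l; split; auto. apply (thm_comb1 _ _ T). intros v w.
      unfold Defs.Imp; simpl. rewrite bigAnd_conj. simpl. auto.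
Qed.

Lemma sat_bigAnd (M : model) s g l :
  (forall x, In x (g :: l) -> sat M s x) -> sat M s (bigAnd P g l).
Proof.
  revert g; induction l as [|g' l IH]; intros g H; simpl.
  - apply H; simpl; auto.
  - split; [apply H; simpl; auto|]. apply IH. intros x Hx; apply H; simpl; auto.
Qed.

Lemma sound_derives Gamma phi : derives P Gamma phi -> conseq P Gamma phi.
Proof.
  intros [H|[g [l [H T]]]] M s HG.
  - apply soundness; auto.
  - pose proof (soundness _ T M s) as HT. rewrite sat_imp in HT. apply HT.
    apply sat_bigAnd. intros x Hx; apply HG, H, Hx.
Qed.

Lemma cons_sub (X Y : form -> Prop) : cons Y -> (forall x, X x -> Y x) -> cons X.
Proof. intros HY S Hd; apply HY; eapply ded_mono; eauto. Qed.

Lemma lindenbaum (S : form -> Prop) : cons S ->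
  exists M, mcs M /\ forall x, S x -> M x.
Proof.
  intros HS.
  destruct (my_zorn form (fun A => cons (fun x => S x \/ A x))) as [A [PA Amax]].
  - intros F FP Ft [l [Hl T]].
    assert (K : (forall x, In x l -> S x) \/
                exists X, F X /\ forall x, In x l -> S x \/ X x).
    { clear T. induction l as [|a l IH].
      - left; simpl; tauto.
      - destruct IH as [IH|[X0 [FX0 IH]]].
        + intros x Hx; apply Hl; simpl; auto.
        + destruct (Hl a (in_eq a l)) as [Ha|[X1 [FX1 Ha]]].
          * left; intros x [<-|Hx]; auto.
          * right; exists X1; split; auto. intros x [<-|Hx]; auto.
        + destruct (Hl a (in_eq a l)) as [Ha|[X1 [FX1 Ha]]].
          * right; exists X0; split; auto. intros x [<-|Hx]; auto.
          * destruct (Ft X0 X1 FX0 FX1) as [E|E].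
            -- right; exists X1; split; auto. intros x [<-|Hx]; auto.
               destruct (IH x Hx); auto.
            -- right; exists X0; split; auto. intros x [<-|Hx]; auto. }
    destruct K as [K|[X [FX K]]].
    + apply HS; exists l; auto.
    + apply (FP X FX); exists l; auto.
  - exists (fun x => S x \/ A x); split; [split|].
    + exact PA.
    + intros psi Hc. right.
      apply (Amax (fun x => A x \/ x = psi)); auto.
      apply (cons_sub _ _ Hc). intros x [Hx|[Hx|Hx]]; auto.
    + auto.
Qed.

Definition W := {X : form -> Prop | mcs X}.
Definition Fvis (X : form -> Prop) a := X (Bplus a) /\ forall b, X (Bplus (Or a b)).
Definition Ivis (X : form -> Prop) a := X (Bplus a) /\ forall c, X (Bplus (And a c)).

Definition canon (M0 : W) : model :=
  {| Defs.st := W; st_inh := M0;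
     R1 := fun X Y => forall a, Fvis (proj1_sig X) a -> proj1_sig Y a;
     R2 := fun X Y => forall a, Ivis (proj1_sig X) a -> proj1_sig Y (Neg a);
     Defs.val := fun p X => proj1_sig X (Var p) |}.

Section Props.
Variable X : form -> Prop.
Hypothesis HX : mcs X.

Lemma RE_mcs a b : thm (Iff a b) -> X (Bplus a) -> X (Bplus b).
Proof.
  intros T H. pose proof (mcs_thm X HX _ (R_E P a b T)) as E.
  apply (mcs_mp X HX _ _ _ H E). bt.
Qed.

Lemma CON_mcs a b : X (Bplus a) -> X (Bplus b) ->
  X (Bplus (And a b)) /\ X (Bplus (Or a b)).
Proof.
  intros Ha Hb. pose proof (mcs_thm X HX _ (Ax_CON P a b)) as C.
  assert (Hab : X (And (Bplus a) (Bplus b))) by (apply mcs_and; auto).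
  pose proof (mcs_mp X HX _ _ (And (Bplus (And a b)) (Bplus (Or a b))) Hab C ltac:(bt)) as K.
  apply mcs_and in K; auto.
Qed.

Lemma DIS_mcs a b c : X (Bplus a) -> X (Bplus (Or a b)) \/ X (Bplus (And a c)).
Proof.
  intros Ha. pose proof (mcs_thm X HX _ (Ax_DIS P a b c)) as C.
  apply (mcs_or X HX). apply (mcs_mp X HX _ _ _ Ha C). bt.
Qed.

Lemma bplus_tb : X (Bplus Top) /\ X (Bplus Bot).
Proof.
  pose proof (mcs_thm X HX _ (R_N P Top (thm_comb0 Top ltac:(bt)))) as K.
  apply mcs_and in K; auto.
Qed.

Lemma F_up f a : Fvis X f -> thm (Imp f a) -> Fvis X a.
Proof.
  intros [H1 H2] T; split.
  - apply (RE_mcs (Or f a)); auto. apply (thm_comb1 _ _ T); bt.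
  - intros b; apply (RE_mcs (Or f (Or a b))); auto. apply (thm_comb1 _ _ T); bt.
Qed.

Lemma F_top : Fvis X Top.
Proof.
  split; [apply bplus_tb|]. intros b. apply (RE_mcs Top); [|apply bplus_tb].
  apply thm_comb0; bt.
Qed.

Lemma F_and a b : Fvis X a -> Fvis X b -> Fvis X (And a b).
Proof.
  intros [Ha Ha'] [Hb Hb']; split; [apply CON_mcs; auto|].
  intros c. apply (RE_mcs (And (Or a c) (Or b c))); [apply thm_comb0; bt|].
  apply CON_mcs; auto.
Qed.

Lemma F_conj l : (forall x, In x l -> Fvis X x) -> Fvis X (conj l).
Proof.
  induction l as [|a l IH]; intros H; simpl.
  - apply F_top.
  - apply F_and; [apply H; simpl; auto|apply IH; intros; apply H; simpl; auto].
Qed.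

Lemma I_down d a : Ivis X d -> thm (Imp a d) -> Ivis X a.
Proof.
  intros [H1 H2] T; split.
  - apply (RE_mcs (And d a)); auto. apply (thm_comb1 _ _ T); bt.
  - intros c; apply (RE_mcs (And d (And a c))); auto. apply (thm_comb1 _ _ T); bt.
Qed.

Lemma I_bot : Ivis X Bot.
Proof.
  split; [apply bplus_tb|]. intros b. apply (RE_mcs Bot); [|apply bplus_tb].
  apply thm_comb0; bt.
Qed.

Lemma I_or a b : Ivis X a -> Ivis X b -> Ivis X (Or a b).
Proof.
  intros [Ha Ha'] [Hb Hb']; split; [apply CON_mcs; auto|].
  intros c. apply (RE_mcs (Or (And a c) (And b c))); [apply thm_comb0; bt|].
  apply CON_mcs; auto.
Qed.

Lemma I_list l : (forall y, In y l -> exists i, Ivis X i /\ y = Neg i) ->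
  exists d, Ivis X d /\ thm (Imp (Neg d) (conj l)).
Proof.
  induction l as [|a l IH]; intros H.
  - exists Bot; split; [apply I_bot|]. apply thm_comb0; bt.
  - destruct IH as [d [Hd T]]. { intros y Hy; apply H; simpl; auto. }
    destruct (H a (in_eq a l)) as [i [Hi ->]].
    exists (Or i d); split; [apply I_or; auto|]. apply (thm_comb1 _ _ T); bt.
Qed.

End Props.

Lemma truth (M0 : W) : forall f (Y : W), sat (canon M0) Y f <-> proj1_sig Y f.
Proof.
  induction f as [p|a IH|a IHa b IHb|a IH]; intros [Y HY]; simpl in *.
  - tauto.
  - rewrite (IH (exist _ Y HY)); simpl. symmetry; apply mcs_neg; auto.
  - rewrite (IHa (exist _ Y HY)) (IHb (exist _ Y HY)); simpl.
    symmetry; apply mcs_and; auto.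
  - split.
    + intros Hs. apply NNPP; intros Hn. destruct Hs as [H1|H2].
      * destruct (lindenbaum (fun x => Fvis Y x \/ x = Neg a)) as [Z [HZ SZ]].
        { intros Hd. apply deduction in Hd.
          assert (Hd2 := ded_mp1 _ _ a Hd ltac:(bt)).
          destruct Hd2 as [l [Hl T]]. apply Hn.
          apply (F_up Y HY (conj l) a); auto. apply F_conj; auto. }
        assert (Ha := H1 (exist _ Z HZ) ltac:(simpl; intros b Hb; apply SZ; auto)).
        apply (IH (exist _ Z HZ)) in Ha; simpl in Ha.
        apply (mcs_neg Z HZ a); auto.
      * destruct (lindenbaum (fun x => (exists i, Ivis Y i /\ x = Neg i) \/ x = a))
          as [Z [HZ SZ]].
        { intros Hd. apply deduction in Hd.
          assert (Hd2 := ded_mp1 _ _ (Neg a) Hd ltac:(bt)).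
          destruct Hd2 as [l [Hl T]].
          destruct (I_list Y HY l Hl) as [d [Hd3 Td]]. apply Hn.
          apply (I_down Y HY d a); auto.
          apply (thm_comb _ _ _ T Td); bt. }
        apply (H2 (exist _ Z HZ)).
        -- simpl; intros i Hi; apply SZ; left; exists i; auto.
        -- apply (IH (exist _ Z HZ)); simpl; auto.
    + intros H. destruct (classic (forall b, Y (Bplus (Or a b)))) as [Hall|Hn].
      * left. intros [t Ht] Hr. apply (IH (exist _ t Ht)). simpl.
        apply Hr. split; auto.
      * apply not_all_ex_not in Hn. destruct Hn as [b0 Hb0].
        right. intros [u Hu] Hr Hs. apply (IH (exist _ u Hu)) in Hs. simpl in Hs.
        assert (Iv : Ivis Y a).
        { split; auto. intros c. destruct (DIS_mcs Y HY a b0 c H); tauto. }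
        pose proof (Hr a Iv) as Hna. simpl in Hna.
        apply (mcs_neg u Hu a); auto.
Qed.

Lemma completeness Gamma phi : conseq P Gamma phi -> derives P Gamma phi.
Proof.
  intros Hc. apply NNPP; intros Hnd.
  destruct (lindenbaum (fun x => Gamma x \/ x = Neg phi)) as [M [HM SM]].
  { intros Hd. apply deduction in Hd. apply Hnd. apply derives_ded.
    apply (ded_mp1 _ _ _ Hd). bt. }
  pose (M0 := exist (fun X => mcs X) M HM : W).
  assert (Hp : sat (canon M0) M0 phi).
  { apply Hc. intros g Hg. apply (truth M0 g M0). simpl; apply SM; auto. }
  apply (truth M0 phi M0) in Hp. simpl in Hp.
  apply (mcs_neg M HM phi); auto.
Qed.

End Main.

Theorem mainTheorem7 (P : Type) (p0 : P) (Gamma : form P -> Prop) (phi : form P) :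
  derives P Gamma phi <-> conseq P Gamma phi.
Proof.
  split; [apply sound_derives|apply (completeness P p0)].
Qed.
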